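(* Let $G$ be a bipartite permutation graph and let $I$ and $J$ be maximum independent sets of $G$. Suppose that there is a reconfiguration sequence between $I$ and $J$. Then there is a reconfiguration sequence of length $|I\setminus J|$ between $I$ and $J$.
   Context: A graph $G=(V,E)$ with $V=[n]$ is a permutation graph if there is a permutation $\pi:[n]\to[n]$ such that for $1\le i<j\le n$, $\{i,j\}\in E$ iff $\pi(i)>\pi(j)$. A reconfiguration sequence between independent sets $I$ and $J$ (with $|I|=|J|$) is a sequence of independent sets $I_0=I,I_1,\dots,I_\ell=J$ such that for each $1\le i\le \ell$, $I_i\setminus I_{i-1}=\{v\}$ and $I_{i-1}\setminus I_i=\{u\}$ for some vertices $u,v$; its length is $\ell$. *)

(* Defs.v *)
From mathcomp Require Import all_boot all_order all_fingroup.
Set Implicit Arguments. Unset Strict Implicit. Unset Printing Implicit Defensive.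

Definition is_perm_graph (n : nat) (e : rel 'I_n) : Prop :=
  exists pi : 'S_n, forall i j : 'I_n,
    e i j = ((i < j) && (pi j < pi i)) || ((j < i) && (pi i < pi j)).

Definition is_bipartite (T : finType) (e : rel T) : Prop :=
  exists c : T -> bool, forall x y, e x y -> c x != c y.

Definition independent (T : finType) (e : rel T) (I : {set T}) : bool :=
  [forall x in I, forall y in I, ~~ e x y].

Definition max_independent (T : finType) (e : rel T) (I : {set T}) : Prop :=
  independent e I /\ forall K : {set T}, independent e K -> #|K| <= #|I|.

Definition reconf_step (T : finType) (A B : {set T}) : Prop :=
  exists u v : T, B :\: A = [set v] /\ A :\: B = [set u].

(* A reconfiguration sequence I_0 = I, I_1, ..., I_l = J is represented by
   the list s = [:: I_1; ...; I_l]; its length is l = size s. *)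
Fixpoint reconf_path (T : finType) (e : rel T) (A : {set T}) (s : seq {set T}) : Prop :=
  match s with
  | [::] => True
  | B :: s' => independent e B /\ reconf_step A B /\ reconf_path e B s'
  end.

Definition reconf_seq (T : finType) (e : rel T) (I J : {set T}) (s : seq {set T}) : Prop :=
  independent e I /\ reconf_path e I s /\ last I s = J.

(* Main.v *)
Require Import Defs.
From mathcomp Require Import all_boot all_order all_fingroup.
From mathcomp Require Import zify.
Set Implicit Arguments. Unset Strict Implicit. Unset Printing Implicit Defensive.

Definition jn (T : finType) (c : T -> bool) (K L : {set T}) : {set T} :=
  [set x | if c x then (x \in K) || (x \in L) else (x \in K) && (x \in L)].

Lemma indepP (T : finType) (e : rel T) (K : {set T}) x y :
  independent e K -> x \in K -> y \in K -> ~~ e x y.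
Proof. by move=> /forall_inP H xK yK; move/forall_inP: (H x xK); apply. Qed.

Lemma jn_indep (T : finType) (e : rel T) (c : T -> bool)
  (hc : forall x y, e x y -> c x != c y) (K L : {set T}) :
  independent e K -> independent e L -> independent e (jn c K L).
Proof.
move=> iK iL; apply/forall_inP => x xJ; apply/forall_inP => y yJ.
apply/negP => exy; have := hc _ _ exy.
move: xJ yJ; rewrite !inE.
case: (c x); case: (c y) => //= + + _.
- case/orP => xK /andP [yK yL].
  + by move/negP: (indepP iK xK yK).
  + by move/negP: (indepP iL xK yL).
- case/andP => xK xL /orP [yK|yL].
  + by move/negP: (indepP iK xK yK).
  + by move/negP: (indepP iL xL yL).
Qed.

Lemma jn_card (T : finType) (c : T -> bool) (K L : {set T}) :
  #|jn c K L| + #|jn (fun x => ~~ c x) K L| = #|K| + #|L|.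
Proof.
rewrite -cardsUI -(cardsUI K L); congr (_ + _)%N; apply: eq_card => x;
rewrite !inE; by case: (c x); case: (x \in K); case: (x \in L).
Qed.

Lemma max_card (T : finType) (e : rel T) (A B : {set T}) :
  max_independent e A -> max_independent e B -> #|A| = #|B|.
Proof.
case=> iA hA [iB hB]; apply/eqP; rewrite eqn_leq hA // hB //.
Qed.

Lemma jn_max (T : finType) (e : rel T) (c : T -> bool)
  (hc : forall x y, e x y -> c x != c y) (K L : {set T}) :
  max_independent e K -> max_independent e L -> max_independent e (jn c K L).
Proof.
move=> mK mL.
have hc' : forall x y, e x y -> ~~ c x != ~~ c y.
  by move=> x y /hc; case: (c x); case: (c y).
have i1 := jn_indep hc mK.1 mL.1.
have i2 := jn_indep hc' mK.1 mL.1.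
have h1 := mK.2 _ i1. have h2 := mL.2 _ i2.
have := jn_card c K L. rewrite (max_card mK mL) => hs.
split => // K' iK'. have := mK.2 _ iK'. rewrite (max_card mK mL). lia.
Qed.

Lemma jn_sub_eq (T : finType) (e : rel T) (c : T -> bool)
  (hc : forall x y, e x y -> c x != c y) (K L : {set T}) :
  max_independent e K -> max_independent e L -> jn c K L \subset K ->
  jn c K L = K.
Proof.
move=> mK mL sub; apply/eqP; rewrite eqEcard sub /=.
by rewrite (max_card (jn_max hc mK mL) mK).
Qed.

Lemma detX (T : finType) (e : rel T) (c : T -> bool)
  (hc : forall x y, e x y -> c x != c y) (K L : {set T}) :
  max_independent e K -> max_independent e L ->
  (forall x, c x -> (x \in K) = (x \in L)) -> K = L.
Proof.
move=> mK mL H.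
have e1 : jn c K L = K.
  apply: (jn_sub_eq hc mK mL); apply/subsetP => x; rewrite inE.
  case cx: (c x); first by rewrite -H // orbb.
  by case/andP.
have e2 : jn c L K = L.
  apply: (jn_sub_eq hc mL mK); apply/subsetP => x; rewrite inE.
  case cx: (c x); first by rewrite H // orbb.
  by case/andP.
rewrite -[LHS]e1 -[RHS]e2; apply/setP => x; rewrite !inE orbC andbC //.
Qed.

Lemma stepX (T : finType) (e : rel T) (c : T -> bool)
  (hc : forall x y, e x y -> c x != c y) (K L : {set T}) v :
  max_independent e K -> max_independent e L -> c v -> v \notin K ->
  (forall x, c x -> (x \in L) = (x == v) || (x \in K)) -> reconf_step K L.
Proof.
move=> mK mL cv vK H.
have e1 : jn c L K = L.
  apply: (jn_sub_eq hc mL mK); apply/subsetP => x; rewrite inE.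
  case cx: (c x); last by case/andP.
  by rewrite (H x cx); case/orP=> -> //; rewrite orbT.
have LK : L :\: K = [set v].
  apply/setP => x; rewrite !inE.
  case cx: (c x).
    rewrite H //; case: eqVneq => [->|] /=; first by rewrite vK.
    by case: (x \in K).
  rewrite -e1 inE cx andbCA andNb andbF.
  by apply/esym/negP => /eqP xv; move: cx; rewrite xv cv.
have c1 : #|L :\: K| = 1 by rewrite LK cards1.
have : #|K :\: L| == 1.
  move: c1; rewrite !cardsD (max_card mK mL) setIC => ->. by [].
case/cards1P => u KL. by exists u, v.
Qed.

Lemma step_card (T : finType) (A B : {set T}) : reconf_step A B -> #|A| = #|B|.
Proof.
case=> u [v [h1 h2]].
have := cardsID B A; have := cardsID A B.
rewrite h1 h2 !cards1 setIC. lia.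
Qed.

Lemma path_cat (T : finType) (e : rel T) (s1 s2 : seq {set T}) (A : {set T}) :
  reconf_path e A s1 -> reconf_path e (last A s1) s2 -> reconf_path e A (s1 ++ s2).
Proof.
elim: s1 A => [|B s1 IH] A //= [iB [st p]] p2.
by split => //; split => //; apply: IH.
Qed.

Definition Xd (T : finType) (c : T -> bool) (Z K : {set T}) : {set T} :=
  [set x | c x && (x \in Z) && (x \notin K)].

Lemma up (T : finType) (e : rel T) (c : T -> bool)
  (hc : forall x y, e x y -> c x != c y) (Z : {set T}) :
  max_independent e Z -> forall (s : seq {set T}) (C K : {set T}),
  max_independent e K -> max_independent e C -> reconf_path e C s ->
  (forall x, c x -> x \in K -> x \in Z) ->
  (forall x, c x -> x \in C -> x \in Z -> x \in K) ->
  (forall x, c x -> x \in Z -> (x \in K) \/ (x \in last C s)) ->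
  exists p, reconf_seq e K Z p /\ size p = #|Xd c Z K|.
Proof.
move=> mZ; elim=> [|C' s IH] C K mK mC /= hp i1 i2 i3.
  have KZ : K = Z.
    apply: (detX hc mK mZ) => x cx; apply/idP/idP; first exact: i1.
    by move=> xZ; case: (i3 x cx xZ) => // xC; apply: i2.
  subst K; exists [::]; split; first by split => //; exact: mK.1.
  apply/esym/eqP; rewrite cards_eq0; apply/eqP/setP => x; rewrite !inE.
  by case: (x \in Z); rewrite ?andbF ?andbT.
case: hp => iC' [st hp].
have mC' : max_independent e C'.
  split => // K0 iK0; rewrite -(step_card st); exact: mC.2.
have [v [hv _]] : exists v, C' :\: C = [set v] /\ True.
  by case: st => u [v [h1 h2]]; exists v.
have inC' : forall x, x \in C' -> x \in C \/ x = v.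
  move=> x xC'; case xC: (x \in C); first by left.
  by right; apply/set1P; rewrite -hv inE xC.
have vC' : v \in C' by have := set11 v; rewrite -hv inE => /andP [].
case: (boolP [&& c v, v \in Z & v \notin K]) => hvb; last first.
  apply: (IH C' K) => //.
  - move=> x cx xC' xZ; case: (inC' x xC') => [xC|xv]; first exact: i2.
    subst x; move: hvb; rewrite cx xZ /=; by case: (v \in K).
case/and3P: hvb => cv vZ vK.
have hc' : forall x y, e x y -> ~~ c x != ~~ c y.
  by move=> x y /hc; case: (c x); case: (c y).
pose K' := jn (fun x => ~~ c x) (jn c K C') Z.
have mK' : max_independent e K' by apply: (jn_max hc' (jn_max hc mK mC') mZ).
have hK' : forall x, c x -> (x \in K') = (x == v) || (x \in K).
  move=> x cx; rewrite !inE cx /=; case: eqVneq => [->|xv] /=.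
    by rewrite vC' vZ orbT.
  case xK: (x \in K) => /=; first by rewrite (i1 x cx xK).
  apply/negP => /andP [xC'Z xZ]; move: xC'Z => /= xC'.
  case: (inC' x xC') => [xC|]; last by move/eqP: xv.
  by rewrite (i2 x cx xC xZ) in xK.
have st' : reconf_step K K' by apply: (stepX hc mK mK' cv vK hK').
have hK2 : forall x, c x -> x \in C' -> x \in Z -> x \in K'.
  by move=> x cx xC' xZ; rewrite /K' !inE cx xC' xZ /= orbT.
clearbody K'.
have [p [[iK'0 [pp lp]] sp]] : exists p, reconf_seq e K' Z p /\ size p = #|Xd c Z K'|.
  apply: (IH C' K' mK' mC' hp _ hK2).
  - move=> x cx; rewrite hK' //; case/orP => [/eqP -> //|]; exact: i1.
  - move=> x cx xZ; case: (i3 x cx xZ) => [xK|]; last by right.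
    by left; rewrite hK' // xK orbT.
exists (K' :: p); split; first by split; [exact: mK.1 | split].
rewrite /= sp.
have -> : Xd c Z K = v |: Xd c Z K'.
  apply/setP => x; rewrite !inE; case: eqVneq => [->|xv] /=.
    by rewrite cv vZ vK.
  case cx: (c x) => //=; by rewrite hK' // (negbTE xv).
have vX : v \notin Xd c Z K' by rewrite /Xd in_set hK' // eqxx andbF.
by rewrite cardsU1 vX.
Qed.

Theorem theorem2 (n : nat) (e : rel 'I_n) (I J : {set 'I_n}) :
  is_perm_graph e -> is_bipartite e ->
  max_independent e I -> max_independent e J ->
  (exists s : seq {set 'I_n}, reconf_seq e I J s) ->
  exists s : seq {set 'I_n}, reconf_seq e I J s /\ size s = #|I :\: J|.
Proof.
move=> _ [c hc] mI mJ [s0 [iI [p0 l0]]].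
have hc' : forall x y, e x y -> ~~ c x != ~~ c y.
  by move=> x y /hc; case: (c x); case: (c y).
pose Z := jn c I J.
have mZ : max_independent e Z := jn_max hc mI mJ.
have [p1 [[_ [pp1 lp1]] sp1]] : exists p, reconf_seq e I Z p /\ size p = #|Xd c Z I|.
  apply: (up hc mZ mI mI p0).
  - by move=> x cx xI; rewrite /Z inE cx xI.
  - by [].
  - by move=> x cx; rewrite l0 /Z inE cx => /orP [] ->; [left|right].
have [p2 [[_ [pp2 lp2]] sp2]] : exists p, reconf_seq e Z J p /\
    size p = #|Xd (fun x => ~~ c x) J Z|.
  apply: (up hc' mJ mZ mI p0).
  - by move=> x cx; rewrite /Z inE (negbTE cx) => /andP [].
  - by move=> x cx xI xJ; rewrite /Z inE (negbTE cx) xI xJ.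
  - by move=> x cx xJ; right; rewrite l0.
exists (p1 ++ p2); split.
  split => //; split; first by apply: path_cat => //; rewrite lp1.
  by rewrite last_cat lp1.
rewrite size_cat sp1 sp2.
have -> : #|I :\: J| = #|J :\: I|.
  by rewrite !cardsD (max_card mI mJ) setIC.
rewrite -(cardsID [set x | c x] (J :\: I)).
congr (_ + _)%N; apply: eq_card => x; rewrite !inE /Z;
  by case: (c x) => /=; case: (x \in I); case: (x \in J).
Qed.
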